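(* Let $q$ be a prime power, $d\ge1$, and let $P\in\mathbb{F}_q[T]$ be monic irreducible of degree $s$ with $s\mid d$. Let $\sigma$ be a generator of $\mathrm{Gal}(\mathbb{F}_{q^d}/\mathbb{F}_q)$ and order the roots $\rho_1,\dots,\rho_s\in\mathbb{F}_{q^d}$ of $P$ so that $\sigma(\rho_i)=\rho_{i+1}$ for $1\le i<s$ and $\sigma(\rho_s)=\rho_1$. For each $i$ let $\lambda_i$ be a generator of the Carlitz torsion module $C_{q^d}[T-\rho_i]=\{z\in\overline{\mathbb{F}_q(T)}: z^{q^d}+(T-\rho_i)z=0\}$, so that $\lambda_i^{q^d-1}=-(T-\rho_i)$. Let $\tilde\sigma$ be any automorphism of $K_{q^d,P}$ fixing $T$ and restricting to $\sigma$ on $\mathbb{F}_{q^d}$. Then for each $1\le i<s$ one has $\tilde\sigma(\lambda_i)=\zeta_{\sigma,i}\lambda_{i+1}$, and $\tilde\sigma(\lambda_s)=\zeta_{\sigma,s}\lambda_1$, where each $\zeta_{\sigma,i}$ is a $(q^d-1)$st root of unity depending on $\sigma$ (and $\tilde\sigma$) and $i$.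
   Context: $K_{q^d,P}$ is the field obtained from $\mathbb{F}_{q^d}(T)$ by adjoining all $u\in\overline{\mathbb{F}_q(T)}$ with $C_{q^d}(P)(u)=0$, where the Carlitz action is $C_{q^d}(T)(u)=Tu+u^{q^d}$ extended $\mathbb{F}_{q^d}$-linearly to polynomials; $K_{q^d,P}/\mathbb{F}_q(T)$ is Galois, and $K_{q^d,P}$ contains all $\lambda_i$. *)

(* Defs.v *)
From HB Require Import structures.
From mathcomp Require Import all_boot all_order all_algebra all_fingroup all_solvable all_field.
Set Implicit Arguments. Unset Strict Implicit. Unset Printing Implicit Defensive.
Import GRing.Theory.
Local Open Scope ring_scope.

Section Carlitz.
Variables (L Om : fieldType) (iota : {rmorphism L -> Om}) (T : Om) (n : nat).

(* Carlitz action of T (with n = q^d):  C(T)(v) = T v + v^n *)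
Definition carlitzT (v : Om) : Om := T * v + v ^+ n.

(* Carlitz action extended L-linearly (L = F_{q^d}) to f in L[T]:
   C(f)(u) = sum_i f_i * C(T)^{o i}(u) *)
Definition carlitz (f : {poly L}) (u : Om) : Om :=
  \sum_(i < size f) iota f`_i * iter i carlitzT u.

Definition carlitz_torsion (rho : L) (z : Om) : Prop :=
  z ^+ n + (T - iota rho) * z = 0.

Definition carlitz_torsion_generator (rho : L) (lam : Om) : Prop :=
  carlitz_torsion rho lam /\
  forall z, carlitz_torsion rho z -> exists f : {poly L}, z = carlitz f lam.

Definition is_subfield (S : Om -> Prop) : Prop :=
  [/\ S 0, S 1, (forall x y, S x -> S y -> S (x - y)),
      (forall x y, S x -> S y -> S (x * y)) & (forall x, S x -> S x^-1)].

(* K_{q^d,P}: the subfield of Om generated by iota(L) (= F_{q^d}), T, and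
   all u with C(P)(u) = 0. *)
Definition carlitz_field (P : {poly L}) (x : Om) : Prop :=
  forall S : Om -> Prop, is_subfield S -> (forall a, S (iota a)) -> S T ->
    (forall u, carlitz P u = 0 -> S u) -> S x.

End Carlitz.

Definition is_field_aut (Om : fieldType) (K : Om -> Prop) (tau : Om -> Om) : Prop :=
  [/\ (forall x, K x -> K (tau x)),
      (forall y, K y -> exists x, K x /\ tau x = y),
      (forall x y, K x -> K y -> tau x = tau y -> x = y),
      (forall x y, K x -> K y -> tau (x + y) = tau x + tau y)
    & (forall x y, K x -> K y -> tau (x * y) = tau x * tau y) /\ tau 1 = 1].

(* Main.v *)
Require Import Defs.
From HB Require Import structures.
From mathcomp Require Import all_boot all_order all_algebra all_fingroup all_solvable all_field.
Import GRing.Theory.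
Local Open Scope ring_scope.

Theorem lemma3p1
  (Fq : finFieldType) (L : splittingFieldType Fq) (d s : nat)
  (hdimL : \dim {:L} = d) (hd : (1 <= d)%N)
  (P : {poly Fq}) (hPmonic : P \is monic) (hPirr : irreducible_poly P)
  (hPdeg : size P = s.+1) (hsd : (s %| d)%N)
  (sigma : gal_of {:L}) (hsigma : generator 'Gal({:L} / 1%AS) sigma)
  (rho : nat -> L)
  (hroots : map_poly (in_alg L) P = \prod_(1 <= i < s.+1) ('X - (rho i)%:P))
  (hrho : forall i, (1 <= i < s)%N -> sigma (rho i) = rho i.+1)
  (hrhos : sigma (rho s) = rho 1%N)
  (Om : closedFieldType) (iota : {rmorphism L -> Om}) (T : Om)
  (hT : forall f : {poly L}, f != 0 -> (map_poly iota f).[T] != 0)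
  (lam : nat -> Om)
  (hlam : forall i, (1 <= i <= s)%N ->
     carlitz_torsion_generator iota T (#|Fq| ^ d) (rho i) (lam i))
  (tau : Om -> Om)
  (htau : is_field_aut
            (carlitz_field iota T (#|Fq| ^ d) (map_poly (in_alg L) P)) tau)
  (htauT : tau T = T)
  (htausigma : forall a : L, tau (iota a) = iota (sigma a)) :
  (forall i, (1 <= i < s)%N ->
     exists zeta : Om, zeta ^+ (#|Fq| ^ d).-1 = 1 /\ tau (lam i) = zeta * lam i.+1)
  /\ (exists zeta : Om, zeta ^+ (#|Fq| ^ d).-1 = 1 /\ tau (lam s) = zeta * lam 1%N).
Proof.
have s_gt0 : (0 < s)%N by case: hPirr; rewrite hPdeg ltnS.
set n := (#|Fq| ^ d)%N.
set f := map_poly (in_alg L) P.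
set K := carlitz_field iota T n f.
have n_gt1 : (1 < n)%N.
  have q1 := finNzRing_gt1 Fq.
  apply: (leq_trans q1); rewrite /n -{1}(expn1 #|Fq|) leq_pexp2l //.
  exact: ltnW.
have [m nE] : exists m, n = m.+2.
  by exists n.-2; move: n_gt1; case: (n) => [|[|k]].
have n1E : n.-1 = m.+1 by rewrite nE.
have fixn : forall a : L, a ^+ n = a.
  move=> a; have := Fermat's_little_theorem {:L}%AS a.
  by rewrite memvf hdimL => /esym/eqP.
have Tr_neq0 : forall r : L, T - iota r != 0.
  move=> r; have := hT ('X - r%:P) (monic_neq0 (monicXsubC r)).
  by rewrite rmorphB /= map_polyX map_polyC /= hornerXsubC.
have lam_neq0 : forall i, (1 <= i <= s)%N -> lam i != 0.
  move=> i hi; have [tors gen] := hlam i hi.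
  have [z] : exists z, root ('X^(m.+1) + (T - iota (rho i))%:P) z.
    by apply/closed_rootP; rewrite size_XnaddC.
  rewrite /root hornerD hornerXn hornerC => /eqP hz.
  have zneq0 : z != 0.
    apply/eqP=> z0; move: hz; rewrite z0 expr0n /= add0r => /eqP.
    by rewrite (negbTE (Tr_neq0 _)).
  have : carlitz_torsion iota T n (rho i) z.
    by rewrite /carlitz_torsion nE exprS mulrC -mulrDl hz mul0r.
  move=> /gen [g zg]; apply/eqP => l0; move: zneq0; rewrite zg l0.
  have it0 : forall k, iter k (carlitzT T n) 0 = 0.
    by elim=> //= k ->; rewrite /carlitzT mulr0 expr0n nE add0r.
  by rewrite /carlitz big1 ?eqxx // => k _; rewrite it0 mulr0.
have K_lam : forall i, (1 <= i <= s)%N -> K (lam i).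
  move=> i hi S _ _ _ hS; apply: hS.
  have [tors _] := hlam i hi.
  have cT : carlitzT T n (lam i) = iota (rho i) * lam i.
    rewrite /carlitzT; move: tors; rewrite /carlitz_torsion mulrBl.
    by move/eqP; rewrite addrA subr_eq0 addrC => /eqP.
  have it : forall k, iter k (carlitzT T n) (lam i) = iota (rho i ^+ k) * lam i.
    elim=> [|k IH]; first by rewrite rmorph1 mul1r.
    rewrite iterS IH.
    have -> : carlitzT T n (iota (rho i ^+ k) * lam i)
        = iota (rho i ^+ k) * carlitzT T n (lam i).
      by rewrite /carlitzT exprMn -rmorphXn fixn mulrDr mulrCA.
    by rewrite cT mulrA -rmorphM exprSr.
  rewrite /carlitz; under eq_bigr => k _ do rewrite it mulrA -rmorphM.
  rewrite -mulr_suml -rmorph_sum -horner_coef.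
  have -> : f.[rho i] = 0.
    apply/eqP; rewrite -/(root f (rho i)) /f hroots.
    rewrite -(big_map rho xpredT (fun x => 'X - x%:P)) root_prod_XsubC.
    apply: map_f; rewrite mem_iota.
    by rewrite add1n subn1 /= ltnS.
  by rewrite rmorph0 mul0r.
have K_T : K T by move=> S _ _ hT' _.
have K_iota : forall a, K (iota a) by move=> a S _ hS _ _.
have K_mul : forall x y, K x -> K y -> K (x * y).
  move=> x y hx hy S hS h1 h2 h3; have hS' := hS; case: hS' => [_ _ _ hM _].
  by apply: hM; [apply: hx | apply: hy].
have K_add : forall x y, K x -> K y -> K (x + y).
  move=> x y hx hy S hS h1 h2 h3; have hS' := hS; case: hS' => [h0 _ hB _ _].
  rewrite -[y]opprK -[- y]add0r; apply: (hB); first by apply: hx.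
  by apply: (hB) => //; apply: hy.
have K_exp : forall x k, K x -> K (x ^+ k).
  move=> x k hx; elim: k => [|k IH]; first by move=> S [] _ ? _ _ _.
  by rewrite exprS; apply: K_mul.
case: htau => _ _ tinj tadd [tmul t1].
have K0 : K 0 by move=> S [] ? _ _ _ _.
have t0 : tau 0 = 0.
  have := tadd 0 0 K0 K0; rewrite addr0 => /eqP.
  by rewrite -subr_eq subrr eq_sym => /eqP.
have texp : forall x k, K x -> tau (x ^+ k) = tau x ^+ k.
  move=> x k hx; elim: k => [|k IH]; first by rewrite !expr0.
  by rewrite !exprS tmul ?IH //; apply: K_exp.
have main : forall i j, (1 <= i <= s)%N -> (1 <= j <= s)%N ->
    sigma (rho i) = rho j ->
    exists zeta : Om, zeta ^+ n.-1 = 1 /\ tau (lam i) = zeta * lam j.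
  move=> i j hi hj hij.
  have [torsi _] := hlam i hi; have [torsj _] := hlam j hj.
  set mu := tau (lam i).
  have mu_neq0 : mu != 0.
    apply/eqP => mu0; move: (lam_neq0 i hi); rewrite (tinj (lam i) 0 (K_lam i hi) K0) ?eqxx //.
    by rewrite t0.
  have eqi : lam i ^+ n + T * lam i = iota (rho i) * lam i.
    by move: torsi; rewrite /carlitz_torsion mulrBl addrA => /eqP; rewrite subr_eq0 => /eqP.
  have eqmu : mu ^+ n + T * mu = iota (rho j) * mu.
    have := congr1 tau eqi.
    rewrite tadd ?tmul ?texp ?htauT ?htausigma ?hij //; try apply: K_lam => //.
    - by apply: K_exp; apply: K_lam.
    - by apply: K_mul => //; apply: K_lam.
  have key : forall x : Om, x != 0 -> x ^+ n + T * x = iota (rho j) * x ->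
      x ^+ n.-1 = - (T - iota (rho j)).
    move=> x x0 hx.
    have h0 : (x ^+ n.-1 + (T - iota (rho j))) * x = 0.
      by rewrite mulrDl -exprSr n1E -nE mulrBl addrA hx subrr.
    apply/eqP; rewrite -subr_eq0 opprK.
    by move/eqP: h0; rewrite mulf_eq0 (negbTE x0) orbF.
  have eqj : lam j ^+ n + T * lam j = iota (rho j) * lam j.
    by move: torsj; rewrite /carlitz_torsion mulrBl addrA => /eqP; rewrite subr_eq0 => /eqP.
  have lj0 := lam_neq0 j hj.
  exists (mu / lam j); split; last by rewrite divfK.
  rewrite exprMn exprVn key // key // mulfV //.
  by rewrite oppr_eq0 Tr_neq0.
split.
  move=> i /andP [h1 h2]; apply: main; rewrite ?h1 ?(ltnW h2) //.
  by apply: hrho; rewrite h1 h2.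
apply: main => //; first by rewrite s_gt0 leqnn.
Qed.
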